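(* Let $n\ge2$. The category $2$-$Ass\overline{\mathbf{V}}_n$ of 2-associative $\overline{\mathbf{V}}_n$-algebras is isomorphic to the category $\mathbf{EnrGrp}_n$ of $n$-enriched groups.
   Context: $\overline{\mathbf{V}}_n$ is the variety whose signature consists of one $(n+1)$-ary operation symbol $\theta$, binary operation symbols $\alpha_1,\dots,\alpha_n$ and one constant $e$, subject to the identities $\alpha_i(a,a)=e$ $(1\le i\le n)$ and $\theta(\alpha_1(a,b),\dots,\alpha_n(a,b),b)=a$. A $\overline{\mathbf{V}}_n$-algebra is 2-associative if for all $a_1,\dots,a_n,b_1,\dots,b_n,c$ one has $\theta(a_1,\dots,a_n,\theta(b_1,\dots,b_n,c))=\theta(\theta(a_1,\dots,a_n,b_1),\dots,\theta(a_1,\dots,a_n,b_n),c)$; $2$-$Ass\overline{\mathbf{V}}_n$ is the full subcategory of $\overline{\mathbf{V}}_n$-algebras (with homomorphisms preserving $\theta$, all $\alpha_i$ and $e$) consisting of 2-associative algebras. An $n$-enriched group ($n\ge2$) is a triple $(G,\gamma,(\alpha_i)_{1\le i\le n})$ where $G$ is a group with unit $e$, $\gamma:G^n\to G$ is a map (not necessarily a homomorphism) and $\alpha_1,\dots,\alpha_n$ are binary operations on $G$, such that for all elements: $\gamma(\alpha_1(a,b),\dots,\alpha_n(a,b))\,b=a$; $\alpha_i(a,a)=e$; and $\gamma(a_1,\dots,a_n)\gamma(b_1,\dots,b_n)=\gamma(\gamma(a_1,\dots,a_n)b_1,\dots,\gamma(a_1,\dots,a_n)b_n)$. $\mathbf{EnrGrp}_n$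 has $n$-enriched groups as objects and group homomorphisms preserving $\gamma$ and all $\alpha_i$ as morphisms. *)

(* Defs.v *)
From mathcomp Require Import all_boot.
From Stdlib Require Import ProofIrrelevance.

Set Implicit Arguments.
Unset Strict Implicit.
Unset Printing Implicit Defensive.

Record Category := {
  Ob : Type;
  Hom : Ob -> Ob -> Type;
  cid : forall A, Hom A A;
  ccomp : forall A B C, Hom B C -> Hom A B -> Hom A C;
  ccomp_id_l : forall A B (f : Hom A B), ccomp (cid B) f = f;
  ccomp_id_r : forall A B (f : Hom A B), ccomp f (cid A) = f;
  ccomp_assoc : forall A B C D (h : Hom C D) (g : Hom B C) (f : Hom A B),
      ccomp h (ccomp g f) = ccomp (ccomp h g) f
}.
Arguments Hom : clear implicits.
Arguments cid {c}.
Arguments ccomp {c A B C}.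

Record Functor (C D : Category) := {
  fob : Ob C -> Ob D;
  fmap : forall A B, Hom C A B -> Hom D (fob A) (fob B);
  fmap_id : forall A, fmap (cid (c:=C) A) = cid (fob A);
  fmap_comp : forall A B E (g : Hom C B E) (f : Hom C A B),
      fmap (ccomp g f) = ccomp (fmap g) (fmap f)
}.
Arguments fob {C D}.
Arguments fmap {C D} _ {A B}.

Definition hom_cast (C : Category) (A A' B B' : Ob C)
  (eA : A = A') (eB : B = B') (f : Hom C A B) : Hom C A' B' :=
  match eA in _ = X, eB in _ = Y return Hom C X Y with
  | erefl, erefl => f end.

Definition functor_left_inverse (C D : Category) (F : Functor C D)
  (G : Functor D C) : Prop :=
  exists e : forall A, fob G (fob F A) = A,
    forall A B (f : Hom C A B), hom_cast (e A) (e B) (fmap G (fmap F f)) = f.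

Definition cat_isomorphic (C D : Category) : Prop :=
  exists (F : Functor C D) (G : Functor D C),
    functor_left_inverse F G /\ functor_left_inverse G F.

Lemma sig_eq_irr (T : Type) (P : T -> Prop) (x y : sig P) :
  proj1_sig x = proj1_sig y -> x = y.
Proof.
case: x => x px; case: y => y py /= exy; subst y.
by rewrite (proof_irrelevance _ px py).
Qed.

(* An (n+1)-ary operation theta(a_1,...,a_n,b) is encoded as          *)
(* theta : ('I_n -> T) -> T -> T.                                      *)

Record VbarAlg (n : nat) := {
  vcar : Type;
  vtheta : ('I_n -> vcar) -> vcar -> vcar;
  valpha : 'I_n -> vcar -> vcar -> vcar;
  ve : vcar;
  valpha_diag : forall i a, valpha i a a = ve;
  vtheta_alpha : forall a b, vtheta (fun i => valpha i a b) b = a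
}.

Definition two_associative n (A : VbarAlg n) : Prop :=
  forall (a b : 'I_n -> vcar A) (c : vcar A),
    vtheta a (vtheta b c) = vtheta (fun i => vtheta a (b i)) c.

Record TwoAssVbarAlg (n : nat) := {
  tav_alg :> VbarAlg n;
  tav_ass : two_associative tav_alg
}.

Definition is_vhom n (A B : VbarAlg n) (f : vcar A -> vcar B) : Prop :=
  [/\ forall a b, f (vtheta a b) = vtheta (fun i => f (a i)) (f b),
      forall i a b, f (valpha i a b) = valpha i (f a) (f b)
    & f (ve A) = ve B].

Definition vhom n (A B : TwoAssVbarAlg n) := {f : vcar A -> vcar B | is_vhom f}.

Definition vhom_id n (A : TwoAssVbarAlg n) : vhom A A.
Proof. by exists (fun x => x); split. Defined.

Definition vhom_comp n (A B C : TwoAssVbarAlg n) (g : vhom B C) (f : vhom A B) :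
  vhom A C.
Proof.
exists (fun x => proj1_sig g (proj1_sig f x)).
case: g f => g [g1 g2 g3] [f [f1 f2 f3]] /=; split.
- by move=> a b; rewrite f1 g1.
- by move=> i a b; rewrite f2 g2.
- by rewrite f3 g3.
Defined.

Definition TwoAssVbar (n : nat) : Category.
Proof.
refine {| Ob := TwoAssVbarAlg n; Hom := @vhom n; cid := @vhom_id n;
          ccomp := @vhom_comp n |}.
- by move=> A B f; apply: sig_eq_irr.
- by move=> A B f; apply: sig_eq_irr.
- by move=> A B C D h g f; apply: sig_eq_irr.
Defined.

Record EnrGroup (n : nat) := {
  gcar : Type;
  gmul : gcar -> gcar -> gcar;
  ginv : gcar -> gcar;
  gone : gcar;
  gmulA : forall x y z, gmul x (gmul y z) = gmul (gmul x y) z;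
  gmul1 : forall x, gmul gone x = x;
  gmulr1 : forall x, gmul x gone = x;
  gmulV : forall x, gmul (ginv x) x = gone;
  gmulVr : forall x, gmul x (ginv x) = gone;
  ggamma : ('I_n -> gcar) -> gcar;
  galpha : 'I_n -> gcar -> gcar -> gcar;
  ggamma_alpha : forall a b, gmul (ggamma (fun i => galpha i a b)) b = a;
  galpha_diag : forall i a, galpha i a a = gone;
  ggamma_mul : forall a b : 'I_n -> gcar,
      gmul (ggamma a) (ggamma b) = ggamma (fun i => gmul (ggamma a) (b i))
}.

Definition is_ghom n (A B : EnrGroup n) (f : gcar A -> gcar B) : Prop :=
  [/\ forall x y, f (gmul x y) = gmul (f x) (f y),
      forall a, f (ggamma a) = ggamma (fun i => f (a i))
    & forall i a b, f (galpha i a b) = galpha i (f a) (f b)].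

Definition ghom n (A B : EnrGroup n) := {f : gcar A -> gcar B | is_ghom f}.

Definition ghom_id n (A : EnrGroup n) : ghom A A.
Proof. by exists (fun x => x); split. Defined.

Definition ghom_comp n (A B C : EnrGroup n) (g : ghom B C) (f : ghom A B) :
  ghom A C.
Proof.
exists (fun x => proj1_sig g (proj1_sig f x)).
case: g f => g [g1 g2 g3] [f [f1 f2 f3]] /=; split.
- by move=> x y; rewrite f1 g1.
- by move=> a; rewrite f2 g2.
- by move=> i a b; rewrite f3 g3.
Defined.

Definition EnrGrp (n : nat) : Category.
Proof.
refine {| Ob := EnrGroup n; Hom := @ghom n; cid := @ghom_id n;
          ccomp := @ghom_comp n |}.
- by move=> A B f; apply: sig_eq_irr.
- by move=> A B f; apply: sig_eq_irr.
- by move=> A B C D h g f; apply: sig_eq_irr.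
Defined.

(* Main.v *)
Require Import Defs.
From mathcomp Require Import all_boot.
From Stdlib Require Import FunctionalExtensionality ProofIrrelevance Eqdep.

Set Implicit Arguments.
Unset Strict Implicit.
Unset Printing Implicit Defensive.

Lemma v_idl n (A : TwoAssVbarAlg n) (b : vcar A) : vtheta (fun _ => ve A) b = b.
Proof.
transitivity (vtheta (fun i => valpha i b b) b); last exact: vtheta_alpha.
congr vtheta; apply: functional_extensionality => i; by rewrite valpha_diag.
Qed.

Lemma v_K n (A : TwoAssVbarAlg n) (a : 'I_n -> vcar A) (b : vcar A) :
  vtheta a b = vtheta (fun _ => vtheta a (ve A)) b.
Proof. by rewrite -{1}(v_idl b) (@tav_ass n A a (fun _ => ve A) b). Qed.

Definition amul n (A : TwoAssVbarAlg n) (a b : vcar A) : vcar A :=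
  vtheta (fun _ => a) b.
Definition ainv n (A : TwoAssVbarAlg n) (a : vcar A) : vcar A :=
  vtheta (fun i => valpha i (ve A) a) (ve A).

Lemma amulA n (A : TwoAssVbarAlg n) (x y z : vcar A) :
  amul x (amul y z) = amul (amul x y) z.
Proof. exact: tav_ass. Qed.
Lemma amul1 n (A : TwoAssVbarAlg n) (x : vcar A) : amul (ve A) x = x.
Proof. exact: v_idl. Qed.
Lemma amulr1 n (A : TwoAssVbarAlg n) (x : vcar A) : amul x (ve A) = x.
Proof.
have := v_K (fun i => valpha i x (ve A)) (ve A).
by rewrite !vtheta_alpha => h; rewrite /amul -h.
Qed.
Lemma amulV n (A : TwoAssVbarAlg n) (x : vcar A) : amul (ainv x) x = ve A.
Proof. by rewrite /amul /ainv -v_K vtheta_alpha. Qed.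
Lemma amulVr n (A : TwoAssVbarAlg n) (x : vcar A) : amul x (ainv x) = ve A.
Proof.
rewrite -[LHS]amul1 -{1}(amulV (ainv x)) -amulA.
by rewrite (amulA (ainv x) x) amulV amul1 amulV.
Qed.
Lemma agam_alpha n (A : TwoAssVbarAlg n) (a b : vcar A) :
  amul (vtheta (fun i => valpha i a b) (ve A)) b = a.
Proof. by rewrite /amul -v_K vtheta_alpha. Qed.
Lemma agam_mul n (A : TwoAssVbarAlg n) (a b : 'I_n -> vcar A) :
  amul (vtheta a (ve A)) (vtheta b (ve A)) =
  vtheta (fun i => amul (vtheta a (ve A)) (b i)) (ve A).
Proof. exact: tav_ass. Qed.

Definition FobV n (A : TwoAssVbarAlg n) : EnrGroup n :=
  {| gcar := vcar A; gmul := @amul n A; ginv := @ainv n A; gone := ve A;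
     gmulA := @amulA n A; gmul1 := @amul1 n A; gmulr1 := @amulr1 n A;
     gmulV := @amulV n A; gmulVr := @amulVr n A;
     ggamma := fun a => vtheta a (ve A); galpha := @valpha n A;
     ggamma_alpha := @agam_alpha n A; galpha_diag := @valpha_diag n A;
     ggamma_mul := @agam_mul n A |}.

Definition gth n (G : EnrGroup n) (a : 'I_n -> gcar G) (b : gcar G) : gcar G :=
  gmul (ggamma a) b.

Lemma gth_ass n (G : EnrGroup n) (a b : 'I_n -> gcar G) (c : gcar G) :
  gth a (gth b c) = gth (fun i => gth a (b i)) c.
Proof. by rewrite /gth gmulA ggamma_mul. Qed.

Definition GobV n (G : EnrGroup n) : TwoAssVbarAlg n :=
  {| tav_alg := {| vcar := gcar G; vtheta := @gth n G; valpha := @galpha n G;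
                   ve := gone G; valpha_diag := @galpha_diag n G;
                   vtheta_alpha := @ggamma_alpha n G |};
     tav_ass := @gth_ass n G |}.

Lemma ghom1 n (G H : EnrGroup n) (f : gcar G -> gcar H) :
  is_ghom f -> f (gone G) = gone H.
Proof.
case=> hm _ _.
have h : f (gone G) = gmul (f (gone G)) (f (gone G)) by rewrite -hm gmul1.
transitivity (gmul (ginv (f (gone G))) (gmul (f (gone G)) (f (gone G)))).
  by rewrite gmulA gmulV gmul1.
by rewrite -h gmulV.
Qed.

Definition FmapV n (A B : TwoAssVbarAlg n) (f : vhom A B) : ghom (FobV A) (FobV B).
Proof.
exists (proj1_sig f); case: f => f [h1 h2 h3] /=; split => //=.
- by move=> x y; rewrite /amul h1.
- by move=> a; rewrite h1 h3.
Defined.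

Definition GmapV n (G H : EnrGroup n) (f : ghom G H) : vhom (GobV G) (GobV H).
Proof.
exists (proj1_sig f); case: f => f hf; have h0 := ghom1 hf.
case: hf => h1 h2 h3; split => //=.
by move=> a b; rewrite /gth h1 h2.
Defined.

Definition FV n : Functor (TwoAssVbar n) (EnrGrp n).
Proof.
refine (@Build_Functor (TwoAssVbar n) (EnrGrp n) (@FobV n) (@FmapV n) _ _).
- by move=> A; apply: sig_eq_irr.
- by move=> A B E g f; apply: sig_eq_irr.
Defined.

Definition GV n : Functor (EnrGrp n) (TwoAssVbar n).
Proof.
refine (@Build_Functor (EnrGrp n) (TwoAssVbar n) (@GobV n) (@GmapV n) _ _).
- by move=> A; apply: sig_eq_irr.
- by move=> A B E g f; apply: sig_eq_irr.
Defined.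

Definition mkV n (T : Type) (th : ('I_n -> T) -> T -> T) (al : 'I_n -> T -> T -> T)
  (e : T) (p : forall i a, al i a a = e) (q : forall a b, th (fun i => al i a b) b = a)
  (r : forall a b c, th a (th b c) = th (fun i => th a (b i)) c) : TwoAssVbarAlg n :=
  {| tav_alg := {| vcar := T; vtheta := th; valpha := al; ve := e;
                   valpha_diag := p; vtheta_alpha := q |}; tav_ass := r |}.

Lemma mkV_eq n T th al e p q r th' p' q' r' :
  th' = th -> @mkV n T th' al e p' q' r' = @mkV n T th al e p q r.
Proof.
move=> h; subst th'.
by rewrite (proof_irrelevance _ p' p) (proof_irrelevance _ q' q) (proof_irrelevance _ r' r).
Qed.

Lemma vcast n T th al e p q r th' p' q' r' U sth sal se sp sq sr sth' sp' sq' sr'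
  (eA : @mkV n T th' al e p' q' r' = @mkV n T th al e p q r)
  (eB : @mkV n U sth' sal se sp' sq' sr' = @mkV n U sth sal se sp sq sr)
  (g : vhom (mkV p' q' r') (mkV sp' sq' sr')) (f : vhom (mkV p q r) (mkV sp sq sr)) :
  th' = th -> sth' = sth -> (forall x, proj1_sig g x = proj1_sig f x) ->
  @hom_cast (TwoAssVbar n) _ _ _ _ eA eB g = f.
Proof.
move=> h1 h2; subst th' sth'.
have ? := proof_irrelevance _ p' p; subst p'.
have ? := proof_irrelevance _ q' q; subst q'.
have ? := proof_irrelevance _ r' r; subst r'.
have ? := proof_irrelevance _ sp' sp; subst sp'.
have ? := proof_irrelevance _ sq' sq; subst sq'.
have ? := proof_irrelevance _ sr' sr; subst sr'.
rewrite (UIP_refl _ _ eA) (UIP_refl _ _ eB) /= => hg.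
by apply: sig_eq_irr; apply: functional_extensionality.
Qed.

Lemma GF_th n (A : TwoAssVbarAlg n) :
  (fun a b => vtheta (fun _ => vtheta a (ve A)) b) = vtheta (v:=A).
Proof.
by apply: functional_extensionality => a; apply: functional_extensionality => b; rewrite -v_K.
Qed.

Lemma GF_eq n (A : TwoAssVbarAlg n) : fob (GV n) (fob (FV n) A) = A.
Proof.
case: A => [[T th al e p q] r]; apply: (mkV_eq (th := th)).
exact: (GF_th (mkV p q r)).
Qed.

Lemma GF_inv n : functor_left_inverse (FV n) (GV n).
Proof.
exists (@GF_eq n) => A B f.
case: A f => [[T th al e p q] r] f; case: B f => [[U sth sal se sp sq] ssr] f.
apply: vcast => //.
- exact: (GF_th (mkV p q r)).
- exact: (GF_th (mkV sp sq ssr)).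
Qed.

Lemma ggamma1 n (G : EnrGroup n) : ggamma (fun _ : 'I_n => gone G) = gone G.
Proof.
have := ggamma_alpha (gone G) (gone G); rewrite gmulr1 => h.
rewrite -[RHS]h; congr ggamma; apply: functional_extensionality => i.
by rewrite galpha_diag.
Qed.

Lemma ggamma_const n (G : EnrGroup n) (a : gcar G) : ggamma (fun _ : 'I_n => a) = a.
Proof.
have hx : forall x : 'I_n -> gcar G, ggamma x = ggamma (fun _ => ggamma x).
  move=> x; have := ggamma_mul x (fun _ => gone G).
  by rewrite ggamma1 !gmulr1.

have h := ggamma_alpha a (gone G); rewrite gmulr1 in h.
by rewrite -{1}h -hx h.
Qed.

Lemma ginv_eq n (G : EnrGroup n) (a : gcar G) :
  gmul (ggamma (fun i => galpha i (gone G) a)) (gone G) = ginv a.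
Proof.
rewrite gmulr1; set x := ggamma _.
have h : gmul x a = gone G by exact: ggamma_alpha.
by rewrite -[LHS]gmulr1 -(gmulVr a) gmulA h gmul1.
Qed.

Definition mkG n T m i o pA p1 p2 p3 p4 g al q1 q2 q3 : EnrGroup n :=
  @Build_EnrGroup n T m i o pA p1 p2 p3 p4 g al q1 q2 q3.

Lemma mkG_eq n T m i o pA p1 p2 p3 p4 g al q1 q2 q3 m' i' pA' p1' p2' p3' p4' g' q1' q2' q3' :
  m' = m -> i' = i -> g' = g ->
  @mkG n T m' i' o pA' p1' p2' p3' p4' g' al q1' q2' q3' =
  @mkG n T m i o pA p1 p2 p3 p4 g al q1 q2 q3.
Proof.
move=> h1 h2 h3; subst m' i' g'.
by rewrite (proof_irrelevance _ pA' pA) (proof_irrelevance _ p1' p1)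
  (proof_irrelevance _ p2' p2) (proof_irrelevance _ p3' p3) (proof_irrelevance _ p4' p4)
  (proof_irrelevance _ q1' q1) (proof_irrelevance _ q2' q2) (proof_irrelevance _ q3' q3).
Qed.

Lemma FG_mul n (G : EnrGroup n) : @gmul n (FobV (GobV G)) = @gmul n G.
Proof.
apply: functional_extensionality => a; apply: functional_extensionality => b.
by rewrite /= /amul /= /gth ggamma_const.
Qed.

Lemma FG_inv n (G : EnrGroup n) : @ginv n (FobV (GobV G)) = @ginv n G.
Proof. apply: functional_extensionality => a; rewrite /= /ainv /= /gth; exact: (@ginv_eq n G a). Qed.

Lemma FG_gam n (G : EnrGroup n) : @ggamma n (FobV (GobV G)) = @ggamma n G.
Proof. apply: functional_extensionality => a; exact: (@gmulr1 n G (@ggamma n G a)). Qed.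

Lemma FG_eq n (G : EnrGroup n) : fob (FV n) (fob (GV n) G) = G.
Proof.
case: G => T m i o pA p1 p2 p3 p4 g al q1 q2 q3.
apply: (@mkG_eq n T m i o pA p1 p2 p3 p4 g al q1 q2 q3).
- exact: (FG_mul (mkG pA p1 p2 p3 p4 q1 q2 q3)).
- exact: (FG_inv (mkG pA p1 p2 p3 p4 q1 q2 q3)).
- exact: (FG_gam (mkG pA p1 p2 p3 p4 q1 q2 q3)).
Qed.

Lemma gcast n T m i o pA p1 p2 p3 p4 g al q1 q2 q3 m' i' pA' p1' p2' p3' p4' g' q1' q2' q3'
  U sm si so spA sp1 sp2 sp3 sp4 sg sal sq1 sq2 sq3 sm' si' spA' sp1' sp2' sp3' sp4' sg' sq1' sq2' sq3'
  (eA : @mkG n T m' i' o pA' p1' p2' p3' p4' g' al q1' q2' q3' =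
        @mkG n T m i o pA p1 p2 p3 p4 g al q1 q2 q3)
  (eB : @mkG n U sm' si' so spA' sp1' sp2' sp3' sp4' sg' sal sq1' sq2' sq3' =
        @mkG n U sm si so spA sp1 sp2 sp3 sp4 sg sal sq1 sq2 sq3)
  (h : ghom (mkG pA' p1' p2' p3' p4' q1' q2' q3') (mkG spA' sp1' sp2' sp3' sp4' sq1' sq2' sq3'))
  (f : ghom (mkG pA p1 p2 p3 p4 q1 q2 q3) (mkG spA sp1 sp2 sp3 sp4 sq1 sq2 sq3)) :
  m' = m -> i' = i -> g' = g -> sm' = sm -> si' = si -> sg' = sg ->
  (forall x, proj1_sig h x = proj1_sig f x) ->
  @hom_cast (EnrGrp n) _ _ _ _ eA eB h = f.
Proof.
move=> e1 e2 e3 e4 e5 e6; subst m' i' g' sm' si' sg'.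
have ? := proof_irrelevance _ pA' pA; subst pA'.
have ? := proof_irrelevance _ p1' p1; subst p1'.
have ? := proof_irrelevance _ p2' p2; subst p2'.
have ? := proof_irrelevance _ p3' p3; subst p3'.
have ? := proof_irrelevance _ p4' p4; subst p4'.
have ? := proof_irrelevance _ q1' q1; subst q1'.
have ? := proof_irrelevance _ q2' q2; subst q2'.
have ? := proof_irrelevance _ q3' q3; subst q3'.
have ? := proof_irrelevance _ spA' spA; subst spA'.
have ? := proof_irrelevance _ sp1' sp1; subst sp1'.
have ? := proof_irrelevance _ sp2' sp2; subst sp2'.
have ? := proof_irrelevance _ sp3' sp3; subst sp3'.
have ? := proof_irrelevance _ sp4' sp4; subst sp4'.
have ? := proof_irrelevance _ sq1' sq1; subst sq1'.
have ? := proof_irrelevance _ sq2' sq2; subst sq2'.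
have ? := proof_irrelevance _ sq3' sq3; subst sq3'.
rewrite (UIP_refl _ _ eA) (UIP_refl _ _ eB) /= => hg.
by apply: sig_eq_irr; apply: functional_extensionality.
Qed.

Lemma FG_inv_l n : functor_left_inverse (GV n) (FV n).
Proof.
exists (@FG_eq n) => A B f.
case: A f => T m i o pA p1 p2 p3 p4 g al q1 q2 q3 f.
case: B f => U sm si so spA sp1 sp2 sp3 sp4 sg sal sq1 sq2 sq3 f.
apply: gcast => //.
- exact: (FG_mul (mkG pA p1 p2 p3 p4 q1 q2 q3)).
- exact: (FG_inv (mkG pA p1 p2 p3 p4 q1 q2 q3)).
- exact: (FG_gam (mkG pA p1 p2 p3 p4 q1 q2 q3)).
- exact: (FG_mul (mkG spA sp1 sp2 sp3 sp4 sq1 sq2 sq3)).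
- exact: (FG_inv (mkG spA sp1 sp2 sp3 sp4 sq1 sq2 sq3)).
- exact: (FG_gam (mkG spA sp1 sp2 sp3 sp4 sq1 sq2 sq3)).
Qed.

Theorem theorem4p7 (n : nat) (hn : 2 <= n) :
  cat_isomorphic (TwoAssVbar n) (EnrGrp n).
Proof.
exists (FV n), (GV n); split; [exact: GF_inv | exact: FG_inv_l].
Qed.
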